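(* Let $R$ be an integral domain with units $q,\lambda,x,q_0$ and elements $A,q_1$, $\delta=q-q^{-1}$, $x\delta=\delta-\lambda+\lambda^{-1}$, and let $\mathrm{BB}_2$ be as in the context. If $e_1\in\mathrm{BB}_2$ has vanishing annihilator ideal in $R$ (i.e. $re_1=0$ with $r\in R$ implies $r=0$), then $A(1-q_0\lambda)=q_1x$. If in addition $e_1$ and $Ye_1$ are $R$-linearly independent, then $q_0-q_0^{-1}=-\delta$.
   Context: $\mathrm{BB}_2=\mathrm{BB}_2(R)$ is the unital associative $R$-algebra generated by invertible $Y,X_1$ and an element $e_1$ subject to: $X_1e_1=e_1X_1=\lambda e_1$, $e_1^2=xe_1$, $X_1^{-1}=X_1-\delta+\delta e_1$, $X_1^2=1+\delta X_1-\delta\lambda e_1$, $X_1YX_1Y=YX_1YX_1$, $Y^2=q_1Y+q_0$, $YX_1Ye_1=e_1$, $e_1Ye_1=Ae_1$. (No relation between $A$, $q_0$ and the other parameters is assumed here.) *)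

(* Defs.v *)
From HB Require Import structures.
From mathcomp Require Import all_boot all_order all_algebra.
Set Implicit Arguments. Unset Strict Implicit. Unset Printing Implicit Defensive.
Import GRing.Theory.
Local Open Scope ring_scope.

Definition BB2_relations (R : comUnitRingType) (B : algType R)
    (q lam x q0 q1 A : R) (Y X1 e1 : B) : Prop :=
  let delta := q - q^-1 in
  (exists Yi : B, Y * Yi = 1 /\ Yi * Y = 1) /\
      X1 * (X1 - delta%:A + delta *: e1) = 1 /\ (X1 - delta%:A + delta *: e1) * X1 = 1 /\
      X1 * e1 = lam *: e1 /\ e1 * X1 = lam *: e1 /\
      e1 * e1 = x *: e1 /\
      X1 * X1 = 1 + delta *: X1 - (delta * lam) *: e1 /\
      X1 * Y * X1 * Y = Y * X1 * Y * X1 /\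
      Y * Y = q1 *: Y + q0%:A /\
      Y * X1 * Y * e1 = e1 /\
    e1 * Y * e1 = A *: e1.

(* Main.v *)
Require Import Defs.
From HB Require Import structures.
From mathcomp Require Import all_boot all_order all_algebra.
From mathcomp Require Import ring.
Import GRing.Theory.
Local Open Scope ring_scope.

Set Implicit Arguments.
Section Lin.
Variables (R : comPzRingType) (V : lmodType R) (u v : V).
Definition lin (a b : R) := a *: u + b *: v.
Lemma linD a b c d : lin a b + lin c d = lin (a + c) (b + d).
Proof. by rewrite /lin !scalerDl addrACA. Qed.
Lemma linN a b : - lin a b = lin (- a) (- b).
Proof. by rewrite /lin opprD !scaleNr. Qed.
Lemma linu a : a *: u = lin a 0.
Proof. by rewrite /lin scale0r addr0. Qed.
Lemma linv a : a *: v = lin 0 a.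
Proof. by rewrite /lin scale0r add0r. Qed.
Lemma linv1 : v = lin 0 1.
Proof. by rewrite -linv scale1r. Qed.
End Lin.
Arguments lin {R V} u v a b.
Arguments linu {R V} u v a.
Arguments linv {R V} u v a.
Arguments linv1 {R V} u v.
Arguments linD {R V} u v a b c d.
Arguments linN {R V} u v a b.

Theorem lemma3 (R : idomainType) (q lam x q0 A q1 : R)
  (hq : q \is a GRing.unit) (hlam : lam \is a GRing.unit)
  (hx : x \is a GRing.unit) (hq0 : q0 \is a GRing.unit)
  (hxd : x * (q - q^-1) = (q - q^-1) - lam + lam^-1)
  (B : algType R) (Y X1 e1 : B)
  (hrel : BB2_relations q lam x q0 q1 A Y X1 e1) :
  (forall r : R, r *: e1 = 0 -> r = 0) ->
  A * (1 - q0 * lam) = q1 * x /\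
  ((forall a b : R, a *: e1 + b *: (Y * e1) = 0 -> a = 0 /\ b = 0) ->
   q0 - q0^-1 = - (q - q^-1)).
Proof.
move: hrel; rewrite /BB2_relations.
set d := q - q^-1.
move=> [_ [_ [hXi [hXe [heX [hee [_ [_ [hYY [hYXY heYe]]]]]]]]]] htor.
set P := Y * e1.
have hYXP : Y * (X1 * P) = e1 by rewrite /P !mulrA.
have h1 : q0 *: (X1 * P) = P - q1 *: e1.
  have := congr1 (fun z => z * (X1 * P)) hYY => /=.
  rewrite mulrDl -scalerAl hYXP mulr_algl -mulrA hYXP -/P => H.
  by rewrite [in RHS]H addrAC subrr add0r.
split.
  have := congr1 (fun z => e1 * z) h1 => /=.
  have E1 : e1 * (X1 * P) = lam *: (A *: e1) by rewrite mulrA heX -scalerAl /P mulrA heYe.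
  have E2 : e1 * P = A *: e1 by rewrite /P mulrA heYe.
  rewrite -scalerAr E1 mulrBr -scalerAr E2 hee.
  rewrite !scalerA -scalerBl => /eqP; rewrite -subr_eq0 -scalerBl => /eqP /htor.
  move=> H; apply/eqP; rewrite -subr_eq0; apply/eqP; rewrite -oppr0 -H; ring.
move=> hind.
set Xi := X1 - d%:A + d *: e1 in hXi.
have h2 : q0 *: P = Xi * (P - q1 *: e1).
  by rewrite -h1 -scalerAr mulrA hXi mul1r.
have hXiP : Xi * P = X1 * P - d *: P + (d * A) *: e1.
  by rewrite /Xi [in LHS]mulrDl [in LHS]mulrDl mulNr mulr_algl -scalerAl /P [e1 * (Y * e1)]mulrA heYe scalerA.
have hXie : Xi * e1 = (lam - d + d * x) *: e1.
  by rewrite /Xi [in LHS]mulrDl [in LHS]mulrDl mulNr mulr_algl -scalerAl hee hXe scalerA -scalerBl -scalerDl.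
have E : q0 *: (q0 *: P) = q0 *: (Xi * P) - (q0 * q1) *: (Xi * e1).
  by rewrite h2 mulrBr scalerBr -scalerAr scalerA.
rewrite hXiP hXie !scalerDr !scalerN h1 !scalerA in E.
rewrite -[X in X - q1 *: e1]scale1r in E.
move: E; rewrite !(linu e1 P) !(linv e1 P) !linN !linD => E.
have := hind (q1 - q0 * (d * A) + q0 * q1 * (lam - d + d * x)) (q0 * q0 - 1 + q0 * d).
case.
  rewrite (linu e1 P) (linv e1 P) linD.
  move/eqP: E; rewrite -subr_eq0 linN linD => /eqP E.
  by rewrite -E; congr lin; ring.
move=> _ H.
have : q0^-1 * (q0 * q0 - 1 + q0 * d) = 0 by rewrite H mulr0.
rewrite mulrDr mulrBr mulr1 !mulrA mulVr // !mul1r => H'.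
by apply/eqP; rewrite -addr_eq0; apply/eqP.
Qed.
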